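(* Let $m,d\geq 1$ and let $f:(0,\infty)^m\times\mathbb{R}^d\to\mathbb{R}$, $f=f(t,x)$, satisfy $f(t,0)=0$, have continuous first-order partial derivatives with respect to each $t^\alpha$ and continuous second-order partial derivatives with respect to the $x^a$. Suppose $f$ is a solution of the backward diffusion-like PDE system $$\frac{\partial f}{\partial t^\alpha}(t,x)+\frac12\,c_\alpha(t)\,\Delta_x f(t,x)=0,\qquad \alpha=1,\dots,m.$$ Then $f$ depends on the point $t=(t^1,\dots,t^m)$ only through the product $v=t^1\cdots t^m$, i.e. there is a function $\varphi$ with $f(t,x)=\varphi(t^1\cdots t^m,x)$; thus $f$ is a function of the volume $v$ of the box $\Omega_{0t}=\prod_\alpha[0,t^\alpha]$.
   Context: Here $c_\alpha(t)=\frac{\partial v}{\partial t^\alpha}=\prod_{\beta\neq\alpha}t^\beta$ where $v=t^1\cdots t^m$, and $\Delta_x f=\sum_{a=1}^d\frac{\partial^2 f}{(\partial x^a)^2}$. *)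

(* Defs.v *)
From HB Require Import structures.
From mathcomp Require Import all_boot all_order all_algebra.
From mathcomp Require Import all_classical all_reals all_analysis.
Set Implicit Arguments. Unset Strict Implicit. Unset Printing Implicit Defensive.
Import Order.TTheory GRing.Theory Num.Theory.
Import numFieldNormedType.Exports.
Local Open Scope ring_scope.

Definition unitv (R : realType) (n : nat) (i : 'I_n) : 'rV[R]_n := delta_mx ord0 i.

Definition posv (R : realType) (m : nat) (t : 'rV[R]_m) : Prop :=
  forall i : 'I_m, 0 < t ord0 i.

Definition vol (R : realType) (m : nat) (t : 'rV[R]_m) : R :=
  \prod_(i < m) t ord0 i.

(* c_alpha(t) = dv/dt^alpha = prod_{beta <> alpha} t^beta *)
Definition cfac (R : realType) (m : nat) (al : 'I_m) (t : 'rV[R]_m) : R :=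
  \prod_(be < m | be != al) t ord0 be.

Definition dt (R : realType) (m d : nat) (f : 'rV[R]_m -> 'rV[R]_d -> R)
  (al : 'I_m) (t : 'rV[R]_m) (x : 'rV[R]_d) : R :=
  'D_(unitv R al) (fun s => f s x) t.

Definition dx (R : realType) (m d : nat) (f : 'rV[R]_m -> 'rV[R]_d -> R)
  (a : 'I_d) (t : 'rV[R]_m) (x : 'rV[R]_d) : R :=
  'D_(unitv R a) (fun y => f t y) x.

Definition dxx (R : realType) (m d : nat) (f : 'rV[R]_m -> 'rV[R]_d -> R)
  (a b : 'I_d) (t : 'rV[R]_m) (x : 'rV[R]_d) : R :=
  'D_(unitv R b) (fun y => dx f a t y) x.

Definition lapx (R : realType) (m d : nat) (f : 'rV[R]_m -> 'rV[R]_d -> R)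
  (t : 'rV[R]_m) (x : 'rV[R]_d) : R :=
  \sum_(a < d) dxx f a a t x.

(* Main.v *)
Require Import Defs.
From HB Require Import structures.
From mathcomp Require Import all_boot all_order all_algebra.
From mathcomp Require Import all_classical all_reals all_analysis.
From mathcomp Require Import ring lra.
Import Order.TTheory GRing.Theory Num.Theory.
Import numFieldNormedType.Exports.
Local Open Scope ring_scope.
Local Open Scope classical_set_scope.

Section Help.
Variable R : realType.

Lemma is_derive_of_cvg (f : R -> R) (a l : R) :
  (fun h => h^-1 * (f (h + a) - f a)) @ 0^' --> l -> is_derive a 1 f l.
Proof.
move=> H.
have E : (fun h : R => h^-1 *: ((f \o shift a) (h *: 1) - f a)) = (fun h => h^-1 * (f (h + a) - f a)).
  by apply/funext => h /=; rewrite /GRing.scale /= mulr1.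
have Dab : derivable f a 1 by rewrite /derivable E; exact: cvgP H.
apply: DeriveDef => //; rewrite /derive E; exact: cvg_lim H.
Qed.

Lemma cvg_of_is_derive (f : R -> R) (a l : R) : is_derive a 1 f l ->
  (fun h => h^-1 * (f (h + a) - f a)) @ 0^' --> l.
Proof.
move=> [D V].
have E : (fun h : R => h^-1 *: ((f \o shift a) (h *: 1) - f a)) = (fun h => h^-1 * (f (h + a) - f a)).
  by apply/funext => h /=; rewrite /GRing.scale /= mulr1.
rewrite -E -V; exact: D.
Qed.

Lemma btw (a b x : R) : (a <= x <= b) || (b <= x <= a) -> `|x - a| <= `|b - a|.
Proof.
case/orP => /andP[h1 h2].
  rewrite (ger0_norm (_ : 0 <= x - a)) ?subr_ge0 // (ger0_norm (_ : 0 <= b - a)) ?subr_ge0;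
   [lra | lra].
rewrite (ler0_norm (_ : x - a <= 0)) ?subr_le0 // (ler0_norm (_ : b - a <= 0)) ?subr_le0;
   [lra | lra].
Qed.

Lemma mvt2 (f df : R -> R) (a b : R) :
  (forall x, `|x - a| <= `|b - a| -> is_derive x 1 f (df x)) ->
  exists c, `|c - a| <= `|b - a| /\ f b - f a = df c * (b - a).
Proof.
move=> H.
have cont : forall lo hi, (lo == a) && (hi == b) || (lo == b) && (hi == a) ->
   {within `[lo, hi], continuous f}.
  move=> lo hi E; apply: derivable_within_continuous => x /[1!in_itv] /= /andP[x1 x2].
  have [] := H x; last done.
  by apply: btw; case/orP: E => /andP[/eqP ? /eqP ?]; subst; rewrite x1 x2 ?orbT.
have [ab|ab] := leP a b.
  have Dab : forall x, x \in `]a, b[%R -> is_derive x 1 f (df x).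
    move=> x /[1!in_itv] /= /andP[x1 x2]; apply: H; apply: btw; by rewrite (ltW x1) (ltW x2).
  have [c /[1!in_itv] /= /andP[c1 c2] E] := MVT_segment ab Dab (cont a b (introT orP (or_introl (introT andP (conj (eqxx a) (eqxx b)))))).
  exists c; split; last exact: E.
  by apply: btw; rewrite c1 c2.
have ba := ltW ab.
have Dab : forall x, x \in `]b, a[%R -> is_derive x 1 f (df x).
  move=> x /[1!in_itv] /= /andP[x1 x2]; apply: H; apply: btw; by rewrite (ltW x1) (ltW x2) orbT.
have [c /[1!in_itv] /= /andP[c1 c2] E] := MVT_segment ba Dab (cont b a (introT orP (or_intror (introT andP (conj (eqxx b) (eqxx a)))))).
exists c; split.
- by apply: btw; rewrite c1 c2 orbT.
- by rewrite -[LHS]opprB E -mulrN opprB.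
Qed.

Lemma chain2 (G Du Dw : R -> R -> R) (W : R -> R) (s0 W' r : R) :
  0 < r ->
  (forall u w, `|u - s0| < r -> `|w - W s0| < r -> is_derive u 1 (G ^~ w) (Du u w)) ->
  (forall u w, `|u - s0| < r -> `|w - W s0| < r -> is_derive w 1 (G u) (Dw u w)) ->
  {for (s0, W s0), continuous (fun p : R * R => Du p.1 p.2)} ->
  {for (s0, W s0), continuous (fun p : R * R => Dw p.1 p.2)} ->
  is_derive s0 1 W W' ->
  is_derive s0 1 (fun s => G s (W s)) (Du s0 (W s0) + Dw s0 (W s0) * W').
Proof.
move=> r0 HDu HDw cDu cDw dW.
set w0 := W s0.
apply: is_derive_of_cvg.
have sc : (fun h : R => h + s0) @ 0^' --> s0.
  apply: cvg_within_filter.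
  have H0 : (fun h : R => h + s0) @ (0:R) --> 0 + s0.
    by apply: cvgD; [exact: cvg_id | exact: cvg_cst].
  by rewrite add0r in H0.
have Wc : (fun h => W (h + s0)) @ 0^' --> w0.
  have /derivable1_diffP/differentiable_continuous Wct := @ex_derive _ _ _ _ _ _ _ dW.
  exact: (cvg_comp _ _ sc Wct).
have /boolp.choice[xi Hxi] : forall h, exists c : R, `|h| < r ->
    `|c - s0| <= `|h + s0 - s0| /\
    G (h + s0) w0 - G s0 w0 = Du c w0 * (h + s0 - s0).
  move=> h.
  have [hr|hr] := pselect (`|h| < r); last by exists 0.
  case: (@mvt2 (G ^~ w0) (Du ^~ w0) s0 (h + s0)); last first.
    by move=> c [c1 c2]; exists c.
  move=> x hx; apply: HDu; last by rewrite subrr normr0.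
  by apply: le_lt_trans hx _; rewrite addrK.
have /boolp.choice[eta Heta] : forall h, exists c : R, `|h| < r -> `|W (h + s0) - w0| < r ->
    `|c - w0| <= `|W (h + s0) - w0| /\
    G (h + s0) (W (h + s0)) - G (h + s0) w0 = Dw (h + s0) c * (W (h + s0) - w0).
  move=> h.
  have [hr|hr] := pselect (`|h| < r); last by exists 0.
  have [wr|wr] := pselect (`|W (h + s0) - w0| < r); last by exists 0.
  case: (@mvt2 (G (h + s0)) (Dw (h + s0)) w0 (W (h + s0))); last first.
    by move=> c [c1 c2]; exists c.
  move=> x hx; apply: HDw; first by rewrite addrK.
  exact: le_lt_trans hx _.
have Wc' := (cvgrPdist_lt _ _).1 Wc.
have xic : xi @ 0^' --> s0.
  apply/cvgrPdist_le => e e0; near=> h.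
  have [|h1 _] := Hxi h; first by near: h; exact: dnbhs0_lt.
  rewrite distrC; apply: (le_trans h1); rewrite addrK; apply: ltW.
  by near: h; exact: dnbhs0_lt.
have etac : eta @ 0^' --> w0.
  apply/cvgrPdist_le => e e0; near=> h.
  have [||h1 _] := Heta h.
  - by near: h; exact: dnbhs0_lt.
  - rewrite distrC; near: h; exact: Wc' _ r0.
  rewrite distrC; apply: (le_trans h1); rewrite distrC; apply: ltW.
  by near: h; exact: Wc' _ e0.
apply: cvg_trans; first apply: (near_eq_cvg (f := fun h => Du (xi h) w0 +
   Dw (h + s0) (eta h) * (h^-1 * (W (h + s0) - W s0)))).
  near=> h.
  have hn0 : h != 0 by near: h; exact: nbhs_dnbhs_neq.
  have hr : `|h| < r by near: h; exact: dnbhs0_lt.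
  have wr : `|W (h + s0) - w0| < r.
    rewrite distrC; near: h; exact: Wc' _ r0.
  have [_ E1] := Hxi h hr.
  have [_ E2] := Heta h hr wr.
  rewrite addrK in E1.
  have -> : G (h + s0) (W (h + s0)) - G s0 (W s0) =
     (G (h + s0) (W (h + s0)) - G (h + s0) w0) + (G (h + s0) w0 - G s0 w0).
    by rewrite /w0 addrA subrK.
  rewrite E1 E2 /w0; field; exact: hn0.
apply: cvgD.
  apply: (cvg_comp (fun h => (xi h, w0)) (fun p : R * R => Du p.1 p.2) _ cDu).
  exact: cvg_pair xic (cvg_cst _).
apply: cvgM.
  apply: (cvg_comp (fun h => (h + s0, eta h)) (fun p : R * R => Dw p.1 p.2) _ cDw).
  exact: cvg_pair sc etac.
exact: cvg_of_is_derive.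
Unshelve. all: end_near.
Qed.
End Help.

Set Implicit Arguments. Unset Strict Implicit.

Definition P2 (R : realType) (m : nat) (t : 'rV[R]_m) (al be : 'I_m) (u w : R) : 'rV[R]_m :=
  t + (u - t ord0 al) *: unitv R al + (w - t ord0 be) *: unitv R be.

Lemma P2E (R : realType) (m : nat) (t : 'rV[R]_m) (al be : 'I_m) (u w : R) (j : 'I_m) :
  al != be ->
  P2 t al be u w ord0 j = if j == al then u else if j == be then w else t ord0 j.
Proof.
move=> ab; rewrite /P2 /unitv !mxE /=.
case: (eqVneq j al) => [->|ja].
  by rewrite ?eqxx ?(negbTE ab) /=; ring.
case: (eqVneq j be) => [->|jb]; first by rewrite ?eqxx /=; ring.
by rewrite !mulr0 !addr0.
Qed.

Lemma P2_id (R : realType) (m : nat) (t : 'rV[R]_m) (al be : 'I_m) :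
  P2 t al be (t ord0 al) (t ord0 be) = t.
Proof. by rewrite /P2 !subrr !scale0r !addr0. Qed.

Lemma inv_derive (R : realType) (c s : R) : s != 0 ->
  is_derive s 1 (fun y : R => c * y^-1) (c * (- s ^-2)).
Proof.
move=> s0.
have d1 : is_derive s 1 (fun y : R => y^-1) (- s ^-2).
  have di : derivable (@id R) s 1 by apply: ex_derive.
  apply: DeriveDef; first exact: (@derivableV _ _ id s 1 s0 di).
  rewrite (@deriveV _ _ id s 1 s0 di) derive_val /GRing.scale /=; ring.
exact: (is_deriveZ c d1).
Qed.

Lemma dir_deriv (R : realType) (m : nat) (F : 'rV[R]_m -> R) (p e : 'rV[R]_m) (c u : R) :
  derivable F (p + (u - c) *: e) e ->
  is_derive u 1 (fun u => F (p + (u - c) *: e)) ('D_e F (p + (u - c) *: e)).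
Proof.
move=> D; apply: is_derive_of_cvg.
have E : (fun h : R => h^-1 * (F (p + (h + u - c) *: e) - F (p + (u - c) *: e))) =
   (fun h => h^-1 *: ((F \o shift (p + (u - c) *: e)) (h *: e) - F (p + (u - c) *: e))).
  apply/funext => h /=; congr (_ * (F _ - _)).
  by rewrite -addrA scalerDl addrCA addrC.
rewrite E; exact: D.
Qed.

Lemma P2_cont (R : realType) (m d : nat) (t : 'rV[R]_m) (al be : 'I_m) (x : 'rV[R]_d) (u0 w0 : R) :
  (fun p : R * R => (P2 t al be p.1 p.2, x)) @ (u0, w0) --> (P2 t al be u0 w0, x).
Proof.
have h1 : (fun p : R * R => p.1 - t ord0 al) @ (u0, w0) --> u0 - t ord0 al.
  by apply: cvgB; [exact: cvg_fst | exact: cvg_cst].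
have h2 : (fun p : R * R => p.2 - t ord0 be) @ (u0, w0) --> w0 - t ord0 be.
  by apply: cvgB; [exact: cvg_snd | exact: cvg_cst].
have h3 : (fun p : R * R => (p.1 - t ord0 al) *: unitv R al) @ (u0, w0) --> (u0 - t ord0 al) *: unitv R al.
  by apply: cvgZ => //; exact: cvg_cst.
have h4 : (fun p : R * R => (p.2 - t ord0 be) *: unitv R be) @ (u0, w0) --> (w0 - t ord0 be) *: unitv R be.
  by apply: cvgZ => //; exact: cvg_cst.
have hP : (fun p : R * R => P2 t al be p.1 p.2) @ (u0, w0) --> P2 t al be u0 w0.
  have h0 : (fun _ : R * R => t) @ (u0, w0) --> t by exact: cvg_cst.
  have := cvgD (cvgD h0 h3) h4.
  rewrite /P2 => H; apply: H; exact: nbhs_filter.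
exact: (cvg_pair hP (cvg_cst x)).
Qed.

Lemma const_pos (R : realType) (h : R -> R) :
  (forall s : R, 0 < s -> is_derive s 1 h 0) -> forall a b : R, 0 < a -> 0 < b -> h a = h b.
Proof.
move=> D.
have key : forall a b, 0 < a -> a <= b -> h a = h b.
  move=> a b a0 ab.
  have Dab : forall x, x \in `]a, b[%R -> is_derive x 1 h 0.
    by move=> x /[1!in_itv] /= /andP[x1 _]; apply: D; apply: lt_trans x1.
  have Cab : {within `[a, b], continuous h}.
    apply: derivable_within_continuous => x /[1!in_itv] /= /andP[x1 _].
    by have [] := D x (lt_le_trans a0 x1).
  have [c _ E] := MVT_segment ab Dab Cab.
  by apply/eqP; rewrite eq_sym -subr_eq0 E mul0r.
move=> a b a0 b0; case: (leP a b) => ab; first exact: key.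
by apply/esym/key => //; apply: ltW.
Qed.

Lemma step (R : realType) (m d : nat) (f : 'rV[R]_m -> 'rV[R]_d -> R) (x : 'rV[R]_d)
  (Hdt : forall (al : 'I_m) t, posv t -> derivable (fun s => f s x) t (unitv R al))
  (Hdt_cont : forall (al : 'I_m) t, posv t ->
     {for (t, x), continuous (fun p : 'rV[R]_m * 'rV[R]_d => dt f al p.1 p.2)})
  (Hpde : forall (al : 'I_m) t, posv t ->
     dt f al t x + 2^-1 * cfac al t * lapx f t x = 0)
  (t : 'rV[R]_m) (al be : 'I_m) (u : R) :
  al != be -> posv t -> 0 < u ->
  f (P2 t al be u (t ord0 al * t ord0 be / u)) x = f t x.
Proof.
move=> ab pt u0.
have ba : be != al by rewrite eq_sym.
set c := t ord0 al * t ord0 be.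
have c0 : 0 < c by rewrite mulr_gt0.
set Q := \prod_(i < m | (i != al) && (i != be)) t ord0 i.
pose G := fun u w => f (P2 t al be u w) x.
have posP : forall u w, 0 < u -> 0 < w -> posv (P2 t al be u w).
  move=> u' w' u'0 w'0 j; rewrite P2E //.
  by case: ifP => _ //; case: ifP => _ //.
have cfa : forall u w, cfac al (P2 t al be u w) = w * Q.
  move=> u' w'; rewrite /cfac (bigD1 be) //= P2E // (negbTE ba) eqxx; congr (_ * _).
  by apply: eq_bigr => i /andP[ia ib]; rewrite P2E // (negbTE ia) (negbTE ib).
have cfb : forall u w, cfac be (P2 t al be u w) = u * Q.
  move=> u' w'; rewrite /cfac (bigD1 al) //= P2E // eqxx; congr (_ * _).
  apply: eq_big => [i|i /andP[ib ia]]; first by rewrite andbC.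
  by rewrite P2E // (negbTE ia) (negbTE ib).
have eqP2 : forall u w, P2 t al be u w =
    (t + (w - t ord0 be) *: unitv R be) + (u - t ord0 al) *: unitv R al.
  by move=> u' w'; rewrite /P2 addrAC.
have hd : forall s : R, 0 < s -> is_derive s 1 (fun s => G s (c * s^-1)) 0.
  move=> s s0.
  have W0 : 0 < c * s^-1 by rewrite mulr_gt0 // invr_gt0.
  pose r := Num.min s (c * s^-1).
  have r0 : 0 < r by rewrite lt_min s0 W0.
  have rs : r <= s by rewrite ge_min lexx.
  have rw : r <= c * s^-1 by rewrite ge_min lexx orbT.
  have pos2 : forall u w, `|u - s| < r -> `|w - c * s^-1| < r -> 0 < u /\ 0 < w.
    move=> u' w'; rewrite !ltr_norml => /andP[h1 _] /andP[h2 _]; split; lra.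
  have E0 : dt f al (P2 t al be s (c * s^-1)) x +
      dt f be (P2 t al be s (c * s^-1)) x * (c * - s ^-2) = 0.
    have E := Hpde al _ (posP _ _ s0 W0).
    have E2 := Hpde be _ (posP _ _ s0 W0).
    rewrite cfa in E; rewrite cfb in E2.
    set L := lapx f (P2 t al be s (c * s^-1)) x in E E2.
    set A := dt f al _ x in E *; set B := dt f be _ x in E2 *.
    have -> : A = - (2^-1 * (c * s^-1 * Q) * L) by apply/eqP; rewrite -addr_eq0 E.
    have -> : B = - (2^-1 * (s * Q) * L) by apply/eqP; rewrite -addr_eq0 E2.
    by field; rewrite lt0r_neq0.
  rewrite -E0.
  apply: (@chain2 R G (fun u w => dt f al (P2 t al be u w) x)
    (fun u w => dt f be (P2 t al be u w) x) (fun y => c * y^-1) s (c * (- s ^-2)) r r0).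
  - move=> u' w' hu hw; have [u'0 w'0] := pos2 _ _ hu hw.
    have -> : G^~ w' = (fun u => (fun s => f s x)
        ((t + (w' - t ord0 be) *: unitv R be) + (u - t ord0 al) *: unitv R al)).
      by apply/funext => v; rewrite /G eqP2.
    rewrite /dt eqP2; apply: dir_deriv.
    by have := Hdt al _ (posP _ _ u'0 w'0); rewrite eqP2.
  - move=> u' w' hu hw; have [u'0 w'0] := pos2 _ _ hu hw.
    rewrite /G /dt /P2; apply: dir_deriv; exact: (Hdt _ _ (posP _ _ u'0 w'0)).
  - exact: (continuous_comp (f := fun p : R * R => (P2 t al be p.1 p.2, x))
      (g := fun q => dt f al q.1 q.2) (x := (s, c / s)) (@P2_cont _ _ _ t al be x s (c / s))
      (Hdt_cont al _ (posP _ _ s0 W0))).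
  - exact: (continuous_comp (f := fun p : R * R => (P2 t al be p.1 p.2, x))
      (g := fun q => dt f be q.1 q.2) (x := (s, c / s)) (@P2_cont _ _ _ t al be x s (c / s))
      (Hdt_cont be _ (posP _ _ s0 W0))).
  - exact: (inv_derive c (lt0r_neq0 s0)).
have := const_pos hd u0 (pt al).
rewrite /G /= => ->.
have -> : c * (t ord0 al)^-1 = t ord0 be by rewrite /c mulrAC divff ?mul1r // lt0r_neq0.
by rewrite P2_id.
Qed.

Local Close Scope classical_set_scope.
Lemma reduce (R : realType) (m : nat) (b0 : 'I_m) (g : 'rV[R]_m -> R) :
  (forall t al u, al != b0 -> posv t -> 0 < u ->
     g (P2 t al b0 u (t ord0 al * t ord0 b0 / u)) = g t) ->
  forall t t', posv t -> posv t' -> vol t = vol t' -> g t = g t'.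
Proof.
move=> Hs t t' pt pt' vt.
suff H : forall k t, posv t -> vol t = vol t' ->
    #|[set i | (i != b0) && (t ord0 i != t' ord0 i)]| = k -> g t = g t'.
  exact: H.
elim=> [|k IH] {}t {}pt {}vt Hk.
  have eq : forall i, i != b0 -> t ord0 i = t' ord0 i.
    move=> i ib; apply/eqP; apply: contraT => ne.
    have : i \in [set i | (i != b0) && (t ord0 i != t' ord0 i)] by rewrite inE; apply/andP.
    by rewrite (cards0_eq Hk) inE.
  have eb : t ord0 b0 = t' ord0 b0.
    move: vt; rewrite /vol (bigD1 b0) //= [in X in _ = X](bigD1 b0) //=.
    have -> : \prod_(i < m | i != b0) t ord0 i = \prod_(i < m | i != b0) t' ord0 i.
      by apply: eq_bigr => i /eq.
    apply: mulIf; apply: lt0r_neq0; apply: prodr_gt0 => i _; exact: pt'.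
  congr g; apply/rowP => j; case: (eqVneq j b0) => [->|jb]; [exact: eb | exact: eq].
set A := [set i | (i != b0) && (t ord0 i != t' ord0 i)] in Hk.
have [al Hal] : exists al, al \in A by apply/set0Pn; rewrite -card_gt0 Hk.
move: (Hal); rewrite inE => /andP[ab ne].
set u := t' ord0 al.
have u0 : 0 < u := pt' al.
rewrite -(Hs t al u ab pt u0); apply: IH.
- move=> j; rewrite P2E //.
  case: ifP => _ //; case: ifP => _ //.
  by rewrite divr_gt0 // mulr_gt0.
- have ba : b0 != al by rewrite eq_sym.
  rewrite -vt /vol (bigD1 al) //= (bigD1 b0) //=.
  rewrite [X in _ = X](bigD1 al) //= [X in _ = _ * X](bigD1 b0) //=.
  rewrite !P2E // ?eqxx (negbTE ba) /=.
  have -> : \prod_(i < m | (i != al) && (i != b0)) P2 t al b0 u (t ord0 al * t ord0 b0 / u) ord0 i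
     = \prod_(i < m | (i != al) && (i != b0)) t ord0 i.
    by apply: eq_bigr => i /andP[ia ib]; rewrite P2E // (negbTE ia) (negbTE ib).
  by field; rewrite lt0r_neq0.
- have Hk' : #|A :\ al| = k by move: Hk; rewrite (cardsD1 al) Hal add1n => -[].
  rewrite -Hk'; apply: eq_card => i; rewrite !inE P2E //.
  case: (eqVneq i al) => [->|ia] /=; first by rewrite eqxx andbF.
  by case: (eqVneq i b0).
Qed.

Unset Implicit Arguments. Set Strict Implicit.

Theorem mainTheorem2 (R : realType) (m d : nat) (hm : (0 < m)%N) (hd : (0 < d)%N)
  (f : 'rV[R]_m -> 'rV[R]_d -> R)
  (Hf0 : forall t, posv t -> f t 0 = 0)
  (Hdt : forall (al : 'I_m) t x, posv t -> derivable (fun s => f s x) t (unitv R al))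
  (Hdt_cont : forall (al : 'I_m) t x, posv t ->
     {for (t, x), continuous (fun p : 'rV[R]_m * 'rV[R]_d => dt f al p.1 p.2)})
  (Hdx : forall (a : 'I_d) t x, posv t -> derivable (fun y => f t y) x (unitv R a))
  (Hdxx : forall (a b : 'I_d) t x, posv t ->
     derivable (fun y => dx f a t y) x (unitv R b))
  (Hdxx_cont : forall (a b : 'I_d) t x, posv t ->
     {for (t, x), continuous (fun p : 'rV[R]_m * 'rV[R]_d => dxx f a b p.1 p.2)})
  (Hpde : forall (al : 'I_m) t x, posv t ->
     dt f al t x + 2^-1 * cfac al t * lapx f t x = 0) :
  exists phi : R -> 'rV[R]_d -> R,
    forall t x, posv t -> f t x = phi (vol t) x.
Proof.
pose b0 : 'I_m := Ordinal hm.
exists (fun v y => if pselect (exists t, posv t /\ vol t = v) is left e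
  then f (proj1_sig (cid e)) y else 0).
move=> t x pt.
case: pselect => [e|ne]; last by exfalso; apply: ne; exists t.
have [pt0 vt0] := proj2_sig (cid e).
apply: (@reduce R m b0 (fun s => f s x)) => //.
move=> s al u ab ps u0.
exact: (step (fun al t pt => Hdt al t x pt) (fun al t pt => Hdt_cont al t x pt)
  (fun al t pt => Hpde al t x pt) ab ps u0).
Qed.
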